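(* Let $I\subseteq[m-1]$ and $J\subseteq[n-1]$. Then $\mathbf m(\kappa_I(\nu),\kappa_J(\nu))=\sum_{K\subseteq[m+n-1]}d_K\,\kappa_K(\nu)$, where $$d_K=\sum_{\substack{A\subseteq[m+n],\ |A|=n:\\ (I\#_AJ)\cap c(A)=\emptyset\\ I\#_AJ\subseteq K\subseteq(I\#_AJ)\cup c(A)}}\left(\frac{1}{1-\nu}\right)^{|K\cap c_2(A)|}.$$
   Context: Fix an integer $\nu>1$ and nonnegative integers $m,n$; $C_\nu$ is the additive cyclic group of order $\nu$. $[a,b]=\{t\in\mathbb Z:a\le t\le b\}$ (empty if $a>b$), $[n]=[1,n]$. $Q_S(\nu)=\bigoplus_{s\in S}C_\nu$; $Q_n(\nu)=Q_{[n-1]}(\nu)$. For $K\subseteq[N-1]$, $\kappa_K(\nu)$ is the function on $Q_N(\nu)$ equal to $1$ at $\mathbf g$ if $\{i:g_i\neq0\}=K$ and $0$ otherwise (superclass identifier). $\psi_\nu(0)=1$, $\psi_\nu(g)=-1/(\nu-1)$ for $g\ne0$. Connectivity: for $A\subseteq[N]$, $\mathrm{conn}(A)$ = maximal subsets of consecutive integers of $A$; $A^c=[N]\setminus A$; $c_1(A)=\{\max B:B\in\mathrm{conn}(A)\}\setminus\{N\}$, $c_2(A)=\{\max B:B\in\mathrm{conn}(A^c)\}\setminus\{N\}$, $c(A)=c_1(A)\cup c_2(A)$; here $N=m+n$. For $A\subseteq[m+n]$ with $|A|=n$, write $A=\{b_1<\dots<b_n\}$, $[m+n]\setminus A=\{a_1<\dots<a_m\}$;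 $I\#_AJ=\{a_i:i\in I\}\cup\{b_j:j\in J\}$. Product: for functions $\phi$ on $Q_m(\nu)$, $\psi$ on $Q_n(\nu)$: if $m=0$ or $n=0$, $\mathbf m_A(\phi,\psi)=\phi\psi$; otherwise $\mathbf m_A(\phi,\psi)(\mathbf g)=\prod_{i\in c_2(A)}\psi_\nu(g_i)\cdot s_A(\phi,\psi)(\mathbf g')$ for $\mathbf g\in Q_{m+n}(\nu)$, with $s_A(\phi,\psi)(\mathbf h)=\phi(h_{a_1},\dots,h_{a_{m-1}})\psi_\nu(h_{a_m})\psi(h_{b_1},\dots,h_{b_{n-1}})\psi_\nu(h_{b_n})$ on $Q_{[m+n]}(\nu)$ and $\mathbf g'$ equal to $\mathbf g$ on $[m+n-1]\setminus c(A)$ and $0$ on $c(A)\cup\{m+n\}$. $\mathbf m=\sum_A\mathbf m_A$ over all $n$-subsets $A$ of $[m+n]$. *)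

(* Defs.v *)
From HB Require Import structures.
From mathcomp Require Import all_boot all_order all_algebra.
Set Implicit Arguments. Unset Strict Implicit. Unset Printing Implicit Defensive.
Import Order.TTheory GRing.Theory Num.Theory.
Local Open Scope ring_scope.

(* Q_N(nu) = (+)_{s in [N-1]} C_nu.  Coordinate s (1 <= s <= N-1) of g is
   g (s-1), i.e. the ordinal i : 'I_(N.-1) stands for the integer i+1.
   C_nu is 'Z_nu (we always assume 1 < nu). *)
Definition Q (nu N : nat) := {ffun 'I_(N.-1) -> 'Z_nu}.

(* A subset K of [N-1] is a {set 'I_(N.-1)} with the same shift convention. *)

Definition kappa (R : numFieldType) (nu N : nat) (K : {set 'I_(N.-1)}) (g : Q nu N) : R :=
  if [set i | g i != 0] == K then 1 else 0.

Definition psinu (R : numFieldType) (nu : nat) (x : 'Z_nu) : R :=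
  if x == 0 then 1 else - (nu.-1%:R)^-1.

(* coordinate g_k of g in Q_N, for k a positive integer (0 outside [1,N-1]) *)
Definition coord (nu N : nat) (g : Q nu N) (k : nat) : 'Z_nu :=
  if k is k'.+1 then
    (if (insub k' : option 'I_(N.-1)) is Some i then g i else 0)
  else 0.

(* Subsets A of [N] are {set 'I_N}, ordinal i standing for the integer i+1.
   Integer membership: *)
Definition inS (N : nat) (A : {set 'I_N}) (k : nat) : bool :=
  [exists i in A, ((val i).+1 == k)%N].

(* c_1(A) = { max B : B in conn(A) } \ {N}: k is the maximum of a maximal run
   of consecutive integers of A iff k in A and k+1 notin A. *)
Definition c1 (N : nat) (A : {set 'I_N}) (k : nat) : bool :=
  [&& inS A k, ~~ inS A k.+1 & k != N].

(* c_2(A) = { max B : B in conn([N] \ A) } \ {N}: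
   k in [N] \ A and k+1 notin [N] \ A, k <> N. *)
Definition c2 (N : nat) (A : {set 'I_N}) (k : nat) : bool :=
  [&& (1 <= k <= N)%N, ~~ inS A k, ~~ ((1 <= k.+1 <= N)%N && ~~ inS A k.+1) & k != N].

Definition cA (N : nat) (A : {set 'I_N}) (k : nat) : bool := c1 A k || c2 A k.

(* A = {b_1 < ... < b_n},  [N] \ A = {a_1 < ... < a_m} *)
Definition bseq (N : nat) (A : {set 'I_N}) : seq nat :=
  sort leq [seq (val i).+1 | i <- enum A].
Definition aseq (N : nat) (A : {set 'I_N}) : seq nat :=
  sort leq [seq (val i).+1 | i <- enum (~: A)].
Definition bA (N : nat) (A : {set 'I_N}) (j : nat) : nat := nth 0%N (bseq A) j.-1.
Definition aA (N : nat) (A : {set 'I_N}) (i : nat) : nat := nth 0%N (aseq A) i.-1.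

Definition sharp (m n : nat) (I : {set 'I_(m.-1)}) (J : {set 'I_(n.-1)})
  (A : {set 'I_(m + n)}) (k : nat) : bool :=
  [exists i in I, aA A (val i).+1 == k] || [exists j in J, bA A (val j).+1 == k].

Definition sA (R : numFieldType) (nu m n : nat) (A : {set 'I_(m + n)})
  (phi : Q nu m -> R) (psi : Q nu n -> R) (h : nat -> 'Z_nu) : R :=
  phi [ffun i : 'I_(m.-1) => h (aA A (val i).+1)] * psinu R (h (aA A m)) *
  psi [ffun j : 'I_(n.-1) => h (bA A (val j).+1)] * psinu R (h (bA A n)).

(* m_A(phi,psi).  When m = 0 or n = 0 there is a single A, and
   phi psi is encoded via the canonical identification Q_{m+n} = Q_m (+) Q_n
   (one factor being trivial): g |-> (g_{a_i})_i, (g_{b_j})_j. *)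
Definition mA (R : numFieldType) (nu m n : nat) (A : {set 'I_(m + n)})
  (phi : Q nu m -> R) (psi : Q nu n -> R) (g : Q nu (m + n)) : R :=
  if (m == 0)%N || (n == 0)%N then
    phi [ffun i : 'I_(m.-1) => coord g (aA A (val i).+1)] *
    psi [ffun j : 'I_(n.-1) => coord g (bA A (val j).+1)]
  else
    (\prod_(1 <= k < m + n | c2 A k) psinu R (coord g k)) *
    sA A phi psi (fun k => if cA A k || (k == m + n)%N then 0 else coord g k).

Definition mprod (R : numFieldType) (nu m n : nat)
  (phi : Q nu m -> R) (psi : Q nu n -> R) (g : Q nu (m + n)) : R :=
  \sum_(A : {set 'I_(m + n)} | #|A| == n) mA A phi psi g.

Definition dK (R : numFieldType) (nu m n : nat) (I : {set 'I_(m.-1)}) (J : {set 'I_(n.-1)})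
  (K : {set 'I_((m + n).-1)}) : R :=
  \sum_(A : {set 'I_(m + n)} |
          [&& #|A| == n,
              [forall k : 'I_(m + n).+2, ~~ (sharp I J A k && cA A k)],
              [forall k : 'I_(m + n).+2, sharp I J A k ==> inS K k] &
              [forall k : 'I_(m + n).+2, inS K k ==> (sharp I J A k || cA A k)]])
    ((1 - nu%:R)^-1) ^+ #|[set i in K | c2 A (val i).+1]|.

(* Main.v *)
Require Import Defs.
From HB Require Import structures.
From mathcomp Require Import all_boot all_order all_algebra.
Import Order.TTheory GRing.Theory Num.Theory.
Local Open Scope ring_scope.
Set Implicit Arguments. Unset Strict Implicit. Unset Printing Implicit Defensive.

Section Seqs.
Variable N : nat.
Implicit Types B A : {set 'I_N}.

Definition sq B := sort leq [seq (val i).+1 | i <- enum B].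

Lemma aseq_sq A : aseq A = sq (~: A). Proof. by []. Qed.
Lemma bseq_sq A : Defs.bseq A = sq A. Proof. by []. Qed.

Lemma sq_sorted B : sorted leq (sq B).
Proof. exact: (sort_sorted leq_total). Qed.

Lemma sq_uniq B : uniq (sq B).
Proof.
rewrite sort_uniq map_inj_uniq ?enum_uniq //.
by move=> i j /eqP; rewrite eqSS => /eqP /val_inj.
Qed.

Lemma size_sq B : size (sq B) = #|B|.
Proof. by rewrite size_sort size_map -cardE. Qed.

Lemma mem_sq B k : (k \in sq B) = inS B k.
Proof.
rewrite mem_sort; apply/mapP/existsP.
  by case=> i; rewrite mem_enum => iB ->; exists i; rewrite iB eqxx.
by case=> i /andP [iB /eqP <-]; exists i; rewrite ?mem_enum.
Qed.

Lemma inS_range B k : inS B k -> (0 < k <= N)%N.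
Proof. by case/existsP=> i /andP [_ /eqP <-]; rewrite /= ltn_ord. Qed.

Lemma inSC A k : inS (~: A) k = (0 < k <= N)%N && ~~ inS A k.
Proof.
apply/idP/idP.
  move=> h; rewrite (inS_range h) /=; apply/negP => /existsP [j /andP [jA /eqP ej]].
  case/existsP: h => i /andP [iA /eqP ei]; move: iA; rewrite inE; apply/negP/negPn.
  suff -> : i = j by [].
  by apply/val_inj/eqP; rewrite -eqSS ei ej.
case/andP=> /andP [k0 kN] nA; case: k k0 kN nA => // k _ kN nA.
apply/existsP; exists (Ordinal kN); rewrite inE eqxx andbT.
by apply/negP => iA; case/negP: nA; apply/existsP; exists (Ordinal kN); rewrite iA eqxx.
Qed.

Lemma sq_max B k : k \in sq B -> (k <= nth 0%N (sq B) (#|B|.-1))%N.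
Proof.
move=> kin; rewrite -(nth_index 0%N kin).
have hi : (index k (sq B) < size (sq B))%N by rewrite index_mem.
apply: (sorted_leq_nth leq_trans leqnn) => //; first exact: sq_sorted.
  by rewrite inE size_sq prednK // -size_sq (leq_ltn_trans _ hi).
by rewrite -ltnS -size_sq prednK // (leq_ltn_trans _ hi).
Qed.

End Seqs.

Section Lasts.
Variables m n : nat.
Implicit Types A : {set 'I_(m + n)}.

Lemma cardC_m A : #|A| = n -> #|~: A| = m.
Proof.
move=> hA; have := cardsC A; rewrite card_ord hA addnC => /eqP.
by rewrite eqn_add2r => /eqP.
Qed.

Lemma aA_mem A i : #|A| = n -> (0 < i <= m)%N -> aA A i \in aseq A.
Proof.
move=> hA /andP [i0 im]; rewrite /aA aseq_sq mem_nth // size_sq cardC_m //.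
by rewrite prednK.
Qed.

Lemma bA_mem A j : #|A| = n -> (0 < j <= n)%N -> bA A j \in Defs.bseq A.
Proof.
move=> hA /andP [j0 jn]; rewrite /bA bseq_sq mem_nth // size_sq hA.
by rewrite prednK.
Qed.

Lemma aA_last A : (0 < m)%N -> #|A| = n -> aA A m = (m + n)%N \/ c2 A (aA A m).
Proof.
move=> m0 hA; have := aA_mem hA (introT andP (conj m0 (leqnn m))).
rewrite aseq_sq mem_sq inSC => /andP [/andP [x0 xN] nx].
case: (aA A m =P (m + n)%N) => [|/eqP xne]; [by left | right].
rewrite /c2 x0 xN nx xne /= andbT.
apply/negP => /andP [_ h]. 
have : (aA A m).+1 \in aseq A by rewrite aseq_sq mem_sq inSC h /= andbT ltn_neqAle xne xN.
rewrite aseq_sq => /sq_max; rewrite cardC_m // -aseq_sq -/(aA A m) ltnn.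
done.
Qed.

Lemma bA_last A : (0 < n)%N -> #|A| = n -> bA A n = (m + n)%N \/ c1 A (bA A n).
Proof.
move=> n0 hA; have := bA_mem hA (introT andP (conj n0 (leqnn n))).
rewrite bseq_sq mem_sq => xin.
case: (bA A n =P (m + n)%N) => [|/eqP xne]; [by left | right].
rewrite /c1 xin xne /= andbT.
apply/negP => h.
have : (bA A n).+1 \in Defs.bseq A by rewrite bseq_sq mem_sq.
rewrite bseq_sq => /sq_max; rewrite hA -bseq_sq -/(bA A n) ltnn.
done.
Qed.

End Lasts.

Section Key.
Variables (m n : nat) (I : {set 'I_(m.-1)}) (J : {set 'I_(n.-1)}).
Variables (A : {set 'I_(m + n)}) (hA : #|A| = n).

Lemma aA_ord (i : 'I_(m.-1)) : aA A i.+1 \in aseq A.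
Proof. by apply: aA_mem => //; rewrite /= (leq_trans (ltn_ord i)) // leq_pred. Qed.

Lemma bA_ord (j : 'I_(n.-1)) : bA A j.+1 \in Defs.bseq A.
Proof. by apply: bA_mem => //; rewrite /= (leq_trans (ltn_ord j)) // leq_pred. Qed.

Lemma aA_notin (i : 'I_(m.-1)) : ~~ inS A (aA A i.+1).
Proof. by have := aA_ord i; rewrite aseq_sq mem_sq inSC => /andP []. Qed.

Lemma bA_in (j : 'I_(n.-1)) : inS A (bA A j.+1).
Proof. by have := bA_ord j; rewrite bseq_sq mem_sq. Qed.

Lemma aA_le (i : 'I_(m.-1)) : (aA A i.+1 <= m + n)%N.
Proof. by have := aA_ord i; rewrite aseq_sq mem_sq => /inS_range /andP []. Qed.

Lemma bA_le (j : 'I_(n.-1)) : (bA A j.+1 <= m + n)%N.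
Proof. by have := bA_ord j; rewrite bseq_sq mem_sq => /inS_range /andP []. Qed.

Lemma ord_ltm (i : 'I_(m.-1)) : (i < m)%N.
Proof. by rewrite (leq_trans (ltn_ord i)) // leq_pred. Qed.
Lemma ord_ltn (j : 'I_(n.-1)) : (j < n)%N.
Proof. by rewrite (leq_trans (ltn_ord j)) // leq_pred. Qed.

Lemma aA_inj (i i' : 'I_(m.-1)) : (aA A i'.+1 == aA A i.+1) = (i' == i).
Proof.
rewrite /aA /= nth_uniq ?aseq_sq ?sq_uniq ?size_sq ?cardC_m ?ord_ltm //.
Qed.

Lemma bA_inj (j j' : 'I_(n.-1)) : (bA A j'.+1 == bA A j.+1) = (j' == j).
Proof.
rewrite /bA /= nth_uniq ?bseq_sq ?sq_uniq ?size_sq ?hA ?ord_ltn //.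
Qed.

Lemma sharp_a (i : 'I_(m.-1)) : sharp I J A (aA A i.+1) = (i \in I).
Proof.
rewrite /sharp; have -> : [exists j in J, bA A j.+1 == aA A i.+1] = false.
  apply/negbTE/existsP => [[j /andP [_ /eqP e]]].
  by have := bA_in j; rewrite e (negbTE (aA_notin i)).
rewrite orbF; apply/existsP/idP => [[i' /andP [i'I]]|iI].
  by rewrite aA_inj => /eqP <-.
by exists i; rewrite iI eqxx.
Qed.

Lemma sharp_b (j : 'I_(n.-1)) : sharp I J A (bA A j.+1) = (j \in J).
Proof.
rewrite /sharp; have -> : [exists i in I, aA A i.+1 == bA A j.+1] = false.
  apply/negbTE/existsP => [[i /andP [_ /eqP e]]].
  by have := bA_in j; rewrite -e (negbTE (aA_notin i)).
apply/existsP/idP => [[j' /andP [j'J]]|jJ].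
  by rewrite bA_inj => /eqP <-.
by exists j; rewrite jJ eqxx.
Qed.

Lemma key (Q : nat -> bool) (hQ : forall k, Q k -> (0 < k <= m + n)%N)
  (hQa : (0 < m)%N -> ~~ Q (aA A m)) (hQb : (0 < n)%N -> ~~ Q (bA A n)) :
  ([set i : 'I_(m.-1) | Q (aA A i.+1)] == I) &&
  ([set j : 'I_(n.-1) | Q (bA A j.+1)] == J) =
  [forall k : 'I_(m + n).+2, sharp I J A k == Q k].
Proof.
apply/idP/idP.
  case/andP => /eqP hI /eqP hJ.
  have hIi : forall i : 'I_(m.-1), Q (aA A i.+1) = (i \in I) by move=> i; rewrite -hI inE.
  have hJj : forall j : 'I_(n.-1), Q (bA A j.+1) = (j \in J) by move=> j; rewrite -hJ inE.
  apply/forallP => -[k _] /=.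
  case sk : (sharp I J A k).
    case/orP: sk => /existsP [x /andP [xin /eqP <-]].
      by rewrite hIi xin.
    by rewrite hJj xin.
  rewrite eq_sym; apply/eqP/negbTE/negP => Qk; move: (hQ _ Qk) => kr.
  case kA : (inS A k).
    have kb : k \in Defs.bseq A by rewrite bseq_sq mem_sq.
    have xn : (index k (Defs.bseq A) < n)%N by have := index_mem k (Defs.bseq A); rewrite kb {2}bseq_sq size_sq hA.
    have ek := nth_index 0%N kb.
    case: (ltnP (index k (Defs.bseq A)) n.-1) => [xl|xg].
      have ej : bA A (Ordinal xl).+1 = k by rewrite /bA /= ek.
      have := hJj (Ordinal xl); rewrite ej Qk => /esym jJ.
      by move: sk; rewrite -ej sharp_b jJ.
    have ex : index k (Defs.bseq A) = n.-1.
      by apply/eqP; rewrite eqn_leq xg -ltnS prednK // (leq_ltn_trans _ xn).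
    have n0 : (0 < n)%N by rewrite (leq_ltn_trans _ xn).
    by move: (hQb n0); rewrite /bA -ex ek Qk.
  have ka : k \in aseq A by rewrite aseq_sq mem_sq inSC kr kA.
  have xm : (index k (aseq A) < m)%N by have := index_mem k (aseq A); rewrite ka {2}aseq_sq size_sq cardC_m.
  have ek := nth_index 0%N ka.
  case: (ltnP (index k (aseq A)) m.-1) => [xl|xg].
    have ei : aA A (Ordinal xl).+1 = k by rewrite /aA /= ek.
    have := hIi (Ordinal xl); rewrite ei Qk => /esym iI.
    by move: sk; rewrite -ei sharp_a iI.
  have ex : index k (aseq A) = m.-1.
    by apply/eqP; rewrite eqn_leq xg -ltnS prednK // (leq_ltn_trans _ xm).
  have m0 : (0 < m)%N by rewrite (leq_ltn_trans _ xm).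
  by move: (hQa m0); rewrite /aA -ex ek Qk.
move/forallP => H.
have Hn : forall k, (k <= m + n)%N -> sharp I J A k = Q k.
  move=> k kle; have kl : (k < (m + n).+2)%N by rewrite ltnS (leq_trans kle).
  by apply/eqP; exact: (H (Ordinal kl)).
apply/andP; split; apply/eqP/setP => x; rewrite inE.
  by rewrite -Hn ?aA_le // sharp_a.
by rewrite -Hn ?bA_le // sharp_b.
Qed.

End Key.

Section Coord.
Variables (nu N : nat) (g : Q nu N).

Lemma coord_ord (i : 'I_(N.-1)) : Defs.coord g i.+1 = g i.
Proof. by rewrite /Defs.coord valK. Qed.




Lemma coord_nz k : Defs.coord g k != 0 -> (0 < k < N)%N.
Proof.
case: k => [|k] //=.
case: insubP => [i ki ei _|]; last by rewrite eqxx.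
have := ltn_ord i; rewrite ei => h; rewrite -(ltn_predRL) //.
Qed.

Lemma coord_N : Defs.coord g N = 0.
Proof.
case: (Defs.coord g N =P 0) => // /eqP /coord_nz; by rewrite ltnn andbF.
Qed.

Lemma inS_Kg k : inS [set i | g i != 0] k = (Defs.coord g k != 0).
Proof.
apply/existsP/idP => [[i /andP [gi /eqP <-]]|].
  by rewrite coord_ord -(in_set (fun i => g i != 0)).
move=> h; have := coord_nz h; case: k h => // k h /andP [_ kN].
have kN' : (k < N.-1)%N by rewrite -ltnS prednK // (leq_ltn_trans _ kN).
exists (Ordinal kN'); rewrite inE eqxx andbT.
by rewrite -coord_ord.
Qed.

End Coord.

Lemma kappa_ffun (R : numFieldType) (nu M : nat) (K : {set 'I_(M.-1)})
  (e : 'I_(M.-1) -> 'Z_nu) (P : 'I_(M.-1) -> bool) :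
  (forall i, (e i != 0) = P i) ->
  kappa R K ([ffun i => e i] : Q nu M) = if [set i | P i] == K then 1 else 0.
Proof.
move=> h; rewrite /kappa; congr (if _ then _ else _); congr (_ == _).
by apply/setP => i; rewrite !inE ffunE h.
Qed.

Lemma cA_degen m n (A : {set 'I_(m + n)}) k :
  #|A| = n -> (m == 0)%N || (n == 0)%N -> cA A k = false.
Proof.
move=> hA /orP [/eqP m0|/eqP n0].
  have AT : A = setT.
    by apply/eqP; rewrite eqEcard subsetT cardsT card_ord hA m0 add0n leqnn.
  have hin : forall k, inS A k = (0 < k <= m + n)%N.
    move=> x; apply/idP/idP; first exact: inS_range.
    case: x => // x /andP [_ xN]; apply/existsP; exists (Ordinal xN).
    by rewrite AT inE eqxx.
  rewrite /cA /c1 /c2 !hin; apply/negbTE; rewrite negb_or; apply/andP; split.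
    apply/negP => /and3P [/andP [k0 kN] h kne].
    by move: h; rewrite /= (ltn_neqAle k) kne kN.
  by apply/negP => /and4P [h1 h2 _ _]; rewrite h1 in h2.
have A0 : A = set0 by apply/eqP; rewrite -cards_eq0 hA n0.
have hin : forall k, inS A k = false.
  by move=> x; apply/negbTE/existsP => -[i]; rewrite A0 inE.
rewrite /cA /c1 /c2 !hin /=; apply/negbTE/negP => /and3P [/andP [k0 kN] h kne].
by move: h; rewrite /= (ltn_neqAle k) kne kN.
Qed.

Section PerA.
Variables (R : numFieldType) (nu m n : nat) (hnu : (1 < nu)%N).
Variables (I : {set 'I_(m.-1)}) (J : {set 'I_(n.-1)}) (g : Q nu (m + n)).
Variables (A : {set 'I_(m + n)}) (hA : #|A| = n).

Let Kg := [set i | g i != 0].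
Let Qk k := ~~ cA A k && (Defs.coord g k != 0).

Lemma cond_eq :
  [&& [forall k : 'I_(m + n).+2, ~~ (sharp I J A k && cA A k)],
      [forall k : 'I_(m + n).+2, sharp I J A k ==> inS Kg k] &
      [forall k : 'I_(m + n).+2, inS Kg k ==> (sharp I J A k || cA A k)]]
  = [forall k : 'I_(m + n).+2, sharp I J A k == Qk k].
Proof.
apply/idP/forallP => [/and3P [/forallP h1 /forallP h2 /forallP h3] k | h].
  have := h1 k; have := h2 k; have := h3 k; rewrite /Qk /Kg ?inS_Kg.
  by case: (sharp I J A k); case: (cA A k); case: (Defs.coord g k != 0).
apply/and3P; split; apply/forallP => k; have := h k; rewrite /Qk /Kg ?inS_Kg;
  by case: (sharp I J A k); case: (cA A k); case: (Defs.coord g k != 0).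
Qed.

Lemma Qk_range k : Qk k -> (0 < k <= m + n)%N.
Proof. by case/andP => _ /coord_nz /andP [-> /ltnW]. Qed.

Lemma Qk_a : (0 < m)%N -> ~~ Qk (aA A m).
Proof.
move=> m0; rewrite /Qk; case: (aA_last m0 hA) => [->|h].
  by rewrite coord_N eqxx andbF.
by rewrite /cA h orbT.
Qed.

Lemma Qk_b : (0 < n)%N -> ~~ Qk (bA A n).
Proof.
move=> n0; rewrite /Qk; case: (bA_last n0 hA) => [->|h].
  by rewrite coord_N eqxx andbF.
by rewrite /cA h.
Qed.

Lemma psinu_c (x : 'Z_nu) : psinu R x = if x == 0 then 1 else (1 - nu%:R)^-1.
Proof.
rewrite /psinu; case: (x == 0) => //.
rewrite -invrN; congr (_^-1).
by rewrite -{2}(prednK (ltnW hnu)) -natr1 opprD addrCA subrr addr0.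
Qed.

Lemma prod_eq :
  \prod_(1 <= k < m + n | c2 A k) psinu R (Defs.coord g k) =
  ((1 - nu%:R)^-1) ^+ #|[set i in Kg | c2 A (val i).+1]|.
Proof.
rewrite big_add1 big_mkord.
transitivity (\prod_(i < (m + n).-1 | c2 A i.+1 && (g i != 0)) ((1 - nu%:R : R)^-1)).
  rewrite [RHS](@big_mkcondr _ _ _ _ _ (fun i : 'I_((m + n).-1) => c2 A i.+1)); apply: eq_bigr => i _.
  by rewrite coord_ord psinu_c; case: (g i == 0).
rewrite -prodr_const; apply: eq_bigl => i; rewrite !inE andbC.
done.
Qed.

Lemma mA_eq :
  mA A (kappa R I) (kappa R J) g =
  if [&& [forall k : 'I_(m + n).+2, ~~ (sharp I J A k && cA A k)],
      [forall k : 'I_(m + n).+2, sharp I J A k ==> inS Kg k] &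
      [forall k : 'I_(m + n).+2, inS Kg k ==> (sharp I J A k || cA A k)]]
  then ((1 - nu%:R)^-1) ^+ #|[set i in Kg | c2 A (val i).+1]| else 0.
Proof.
rewrite cond_eq -(key I J hA Qk_range Qk_a Qk_b) /mA.
case: ifP => deg.
  have cA0 := fun k => cA_degen k hA deg.
  rewrite (@kappa_ffun _ _ _ _ _ (fun i => Qk (aA A i.+1))); last first.
    by move=> i; rewrite /Qk cA0.
  rewrite (@kappa_ffun _ _ _ _ _ (fun i => Qk (bA A i.+1))); last first.
    by move=> i; rewrite /Qk cA0.
  have -> : [set i in Kg | c2 A (val i).+1] = set0.
    by apply/setP => i; rewrite !inE; have := cA0 (val i).+1; rewrite /cA => /norP [_ /negbTE ->]; rewrite andbF.
  rewrite cards0 expr0.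
  by case: ([set i | _] == I); case: ([set i | _] == J); rewrite ?mulr1 ?mulr0 ?mul0r.
have hh : forall k, ((if cA A k || (k == m + n)%N then 0 else Defs.coord g k) != 0) = Qk k.
  move=> k; rewrite /Qk; case: (cA A k) => /=; first by rewrite ?eqxx.
  by case: (k =P (m + n)%N) => [->|_]; rewrite ?coord_N ?eqxx.
rewrite /sA prod_eq.
rewrite (@kappa_ffun _ _ _ _ _ (fun i => Qk (aA A i.+1))); last by move=> i; rewrite hh.
rewrite (@kappa_ffun _ _ _ _ _ (fun i => Qk (bA A i.+1))); last by move=> i; rewrite hh.
move/negbT: deg; rewrite negb_or -!lt0n => /andP [m0 n0].
have -> : (if cA A (aA A m) || (aA A m == m + n)%N then 0 else Defs.coord g (aA A m)) = 0.
  case: (aA_last m0 hA) => [->|h]; first by rewrite eqxx orbT.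
  by rewrite /cA h orbT.
have -> : (if cA A (bA A n) || (bA A n == m + n)%N then 0 else Defs.coord g (bA A n)) = 0.
  case: (bA_last n0 hA) => [->|h]; first by rewrite eqxx orbT.
  by rewrite /cA h.
rewrite /psinu eqxx !mulr1.
by case: ([set i | _] == I); case: ([set i | _] == J); rewrite ?mulr1 ?mulr0 ?mul0r.
Qed.

End PerA.

Unset Implicit Arguments.
Theorem proposition3p15 (R : numFieldType) (nu m n : nat) (hnu : (1 < nu)%N)
  (I : {set 'I_(m.-1)}) (J : {set 'I_(n.-1)}) (g : Q nu (m + n)) :
  mprod (kappa R I) (kappa R J) g =
  \sum_(K : {set 'I_((m + n).-1)}) dK R nu I J K * kappa R K g.
Proof.
rewrite (bigD1 [set i | g i != 0]) //= big1 => [|K nK]; last first.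
  by rewrite /kappa eq_sym (negbTE nK) mulr0.
rewrite /kappa eqxx mulr1 addr0 /mprod /dK big_mkcondr.
by apply: eq_bigr => A /eqP hA; rewrite (mA_eq R hnu I J g hA).
Qed.
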